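(* Let $\alpha\in\mathbb{R}$ not be a negative integer, let $n\in\mathbb{N}=\{1,2,\dots\}$ and $0\le i\le n-1$. Then on $(0,\infty)$ the function $$t\mapsto \sum_{k=0}^i\frac{(-1)^k}{(i-k)!}\,t^{i-k}\,\ell_{n-1-k}^{(\alpha+1+k)}(t)$$ is an antiderivative of $t\mapsto \frac{t^i}{i!}\ell_n^{(\alpha)}(t)$, i.e. $\int \frac{t^i}{i!}\ell_n^{(\alpha)}(t)\,dt=\sum_{k=0}^i\frac{(-1)^k}{(i-k)!}t^{i-k}\ell_{n-1-k}^{(\alpha+1+k)}(t)$.
   Context: The generalized Laguerre polynomials are $L_n^{(\alpha)}(t)=\sum_{k=0}^n(-1)^k\binom{n+\alpha}{n-k}\frac{t^k}{k!}$, and the Laguerre functions are $\ell_n^{(\alpha)}(t)=\frac{n!}{\Gamma(n+\alpha+1)}t^{\alpha}e^{-t}L_n^{(\alpha)}(t)$ for $t>0$ (defined for $\alpha\neq-1,-2,\dots$). *)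

(* Defs.v *)
From Stdlib Require Import Reals Factorial.
From Coquelicot Require Import Coquelicot.
Open Scope R_scope.

Fixpoint falling (x : R) (m : nat) : R :=
  match m with
  | O => 1
  | S m' => falling x m' * (x - INR m')
  end.

Definition gbinom (x : R) (m : nat) : R := falling x m / INR (Factorial.fact m).

(* Euler's Gamma function, via the Gauss product formula
   Gamma(x) = lim_m m! m^x / (x (x+1) ... (x+m)),
   valid for all real x that are not nonpositive integers. *)
Fixpoint rising (x : R) (m : nat) : R :=
  match m with
  | O => 1
  | S m' => rising x m' * (x + INR m')
  end.

Definition Gamma (x : R) : R :=
  real (Lim_seq (fun m => INR (Factorial.fact m) * Rpower (INR m) x / rising x (S m))).

Definition laguerreL (n : nat) (a t : R) : R :=
  sum_f_R0 (fun k => (-1) ^ k * gbinom (INR n + a) (n - k) * t ^ k / INR (Factorial.fact k)) n.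

Definition laguerre_fun (n : nat) (a t : R) : R :=
  INR (Factorial.fact n) / Gamma (INR n + a + 1) * Rpower t a * exp (- t) * laguerreL n a t.

(* Main.v *)
Require Import Defs.
From Stdlib Require Import Reals Lia Lra Factorial.
From Coquelicot Require Import Coquelicot.
Open Scope R_scope.

Lemma isd_mult (f g : R -> R) (x df dg : R) : is_derive f x df -> is_derive g x dg ->
  is_derive (fun s => f s * g s) x (df * g x + f x * dg).
Proof. intros. apply (is_derive_mult f g x df dg); auto. intros; apply Rmult_comm. Qed.

Lemma isd_val (f : R -> R) (x l lp : R) : is_derive f x l -> l = lp -> is_derive f x lp.
Proof. intros H ->; exact H. Qed.

Lemma isd_sum (f : nat -> R -> R) (f' : nat -> R) (x : R) M :
  (forall k, (k <= M)%nat -> is_derive (f k) x (f' k)) ->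
  is_derive (fun s => sum_f_R0 (fun k => f k s) M) x (sum_f_R0 f' M).
Proof.
  induction M; intros H; simpl.
  - apply H; lia.
  - apply (is_derive_plus (fun s => sum_f_R0 (fun k => f k s) M) (f (S M))).
    + apply IHM; intros; apply H; lia.
    + apply H; lia.
Qed.

Lemma isd_poly (c : nat -> R) (x : R) M :
  is_derive (fun s => sum_f_R0 (fun k => c k * s ^ k) M) x
    (sum_f_R0 (fun k => c k * (INR k * x ^ Init.Nat.pred k)) M).
Proof.
  apply (isd_sum (fun k s => c k * s ^ k)). intros k _.
  apply is_derive_scal. eapply isd_val. apply is_derive_pow. apply is_derive_id.
  simpl. change one with 1. ring.
Qed.

Lemma tel1 (c e D : nat -> R) t M :
  D 0%nat = e 0%nat * c 0%nat ->
  (forall k, (k < M)%nat -> D (S k) = e (S k) * c (S k) - c k) ->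
  sum_f_R0 (fun k => e k * c k * t ^ k - c k * t ^ (S k)) M
  = sum_f_R0 (fun k => D k * t ^ k) M - c M * t ^ (S M).
Proof.
  intros H0 H. induction M.
  - simpl. rewrite H0. ring.
  - rewrite !tech5, IHM by (intros; apply H; lia). rewrite H by lia. simpl. ring.
Qed.

Lemma tel2 (u v : nat -> R) M :
  (forall k, (k < M)%nat -> u k = - v (S k)) ->
  sum_f_R0 (fun k => u k + v k) M = v 0%nat + u M.
Proof.
  intros H. induction M.
  - simpl. ring.
  - rewrite tech5, IHM by (intros; apply H; lia). rewrite H by lia. ring.
Qed.

Lemma gbinom_S x j : INR (S j) * gbinom x (S j) = (x - INR j) * gbinom x j.
Proof.
  unfold gbinom. simpl falling. change (Factorial.fact (S j)) with (S j * Factorial.fact j)%nat; rewrite mult_INR.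
  assert (INR (Factorial.fact j) <> 0) by (apply not_0_INR, fact_neq_0).
  assert (INR (S j) <> 0) by (apply not_0_INR; lia).
  field. auto.
Qed.

Lemma gbinom_0 x : gbinom x 0 = 1.
Proof. unfold gbinom; simpl; field. Qed.

Definition cf (m : nat) (x : R) (k : nat) : R :=
  (-1) ^ k * gbinom x (m - k) / INR (Factorial.fact k).

Lemma lagE m a t : laguerreL m a t = sum_f_R0 (fun k => cf m (INR m + a) k * t ^ k) m.
Proof. unfold laguerreL, cf. apply sum_eq. intros. field. apply not_0_INR, fact_neq_0. Qed.

Lemma fact_pos k : INR (Factorial.fact k) <> 0.
Proof. apply not_0_INR, fact_neq_0. Qed.

Lemma mul_sum x f N : x * sum_f_R0 f N = sum_f_R0 (fun i => x * f i) N.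
Proof. induction N; simpl; [ring| rewrite <- IHN; ring]. Qed.

Lemma lag_der m a t : is_derive (fun s => laguerreL m a s) t
  (sum_f_R0 (fun k => cf m (INR m + a) k * (INR k * t ^ Init.Nat.pred k)) m).
Proof.
  eapply is_derive_ext. intro s. symmetry. apply lagE. apply isd_poly.
Qed.

Lemma lag_id m b t :
  (b + 1) * laguerreL m (b + 1) t - t * laguerreL m (b + 1) t
  + t * sum_f_R0 (fun k => cf m (INR m + (b+1)) k * (INR k * t ^ Init.Nat.pred k)) m
  = INR (S m) * laguerreL (S m) b t.
Proof.
  set (c := cf m (INR m + (b + 1))).
  assert (E : (b + 1) * laguerreL m (b + 1) t - t * laguerreL m (b + 1) t
   + t * sum_f_R0 (fun k => c k * (INR k * t ^ Init.Nat.pred k)) m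
   = sum_f_R0 (fun k => (b + 1 + INR k) * c k * t ^ k - c k * t ^ (S k)) m).
  { rewrite lagE. fold c.
    rewrite !mul_sum.
    rewrite <- minus_sum, <- plus_sum. apply sum_eq. intros k _.
    destruct k; simpl; ring. }
  rewrite E. clear E.
  rewrite (tel1 c (fun k => b + 1 + INR k) (fun k => INR (S m) * cf (S m) (INR (S m) + b) k)).
  - rewrite lagE, mul_sum, tech5.
    set (d := cf (S m) (INR (S m) + b)).
    assert (Hd : INR (S m) * d (S m) = - c m).
    { unfold c, d, cf. rewrite !Nat.sub_diag, !gbinom_0.
      change (Factorial.fact (S m)) with (S m * Factorial.fact m)%nat.
      rewrite mult_INR. simpl pow.
      assert (INR (S m) <> 0) by (apply not_0_INR; lia).
      generalize (fact_pos m); intro. field. auto. }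
    assert (Hs : sum_f_R0 (fun i : nat => INR (S m) * (d i * t ^ i)) m
      = sum_f_R0 (fun k : nat => INR (S m) * d k * t ^ k) m) by (apply sum_eq; intros; ring).
    rewrite Hs. rewrite <- Rmult_assoc, Hd. ring.
  - unfold c, cf. rewrite !Nat.sub_0_r.
    replace (INR (S m) + b) with (INR m + (b + 1)) by (rewrite S_INR; ring).
    transitivity ((INR (S m) * gbinom (INR m + (b + 1)) (S m)) * ((-1)^0 / INR (Factorial.fact 0))).
    { field. apply fact_pos. }
    rewrite gbinom_S. simpl INR. field.
  - intros k Hk. unfold c, cf.
    replace (m - k)%nat with (S (m - S k))%nat by lia.
    replace (S m - S k)%nat with (S (m - S k))%nat by lia.
    change (Factorial.fact (S k)) with (S k * Factorial.fact k)%nat.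
    rewrite mult_INR.
    assert (Hr : INR (S (m - S k)) * gbinom (INR m + (b + 1)) (S (m - S k))
      = (INR m + (b+1) - INR (m - S k)) * gbinom (INR m + (b + 1)) (m - S k)) by apply gbinom_S.
    rewrite minus_INR in Hr by lia. rewrite S_INR in Hr.
    replace (INR (S m) + b) with (INR m + (b + 1)) by (rewrite S_INR; ring).
    assert (INR (S k) <> 0) by (apply not_0_INR; lia).
    generalize (fact_pos k); intro.
    rewrite S_INR in *. simpl pow.
    rewrite minus_INR in Hr by lia. rewrite S_INR in Hr.
    apply (Rmult_eq_reg_l (INR (S k) * INR (Factorial.fact k))).
    2: { rewrite S_INR; apply Rmult_integral_contrapositive; auto. }
    set (G1 := gbinom (INR m + (b + 1)) (S (m - S k))) in *.
    set (G0 := gbinom (INR m + (b + 1)) (m - S k)) in *.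
    assert (Hmk : INR m - (INR k + 1) + 1 <> 0).
    { assert (INR k < INR m) by (apply lt_INR; lia). lra. }
    assert (HG1 : G1 = (INR m + (b + 1) - (INR m - (INR k + 1))) * G0 / (INR m - (INR k + 1) + 1)).
    { rewrite <- Hr. field. auto. }
    rewrite HG1. rewrite S_INR. field. split; auto.
Qed.

Lemma exp_neg_der (t : R) : is_derive (fun s => exp (- s)) t (- exp (- t)).
Proof.
  auto_derive. auto. ring.
Qed.

Lemma lf_der m b c (t : R) : 0 < t -> c = b + 1 ->
  is_derive (laguerre_fun m c) t (laguerre_fun (S m) b t).
Proof.
  intros Ht ->.
  set (K := INR (Factorial.fact m) / Gamma (INR m + (b + 1) + 1)).
  assert (H1 : is_derive (fun s => K * Rpower s (b+1)) t (K * ((b+1) * Rpower t (b+1-1)))).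
  { apply is_derive_scal. apply is_derive_Reals, derivable_pt_lim_power; auto. }
  pose proof (isd_mult _ _ _ _ _ H1 (exp_neg_der t)) as H3.
  pose proof (isd_mult _ _ _ _ _ H3 (lag_der m (b+1) t)) as H4.
  cbv beta in H4.
  unfold laguerre_fun. fold K.
  eapply isd_val. exact H4.
  pose proof (lag_id m b t) as HL.
  replace (b + 1 - 1) with b by ring.
  rewrite Rpower_plus, Rpower_1 by auto.
  replace (INR (S m) + b + 1) with (INR m + (b + 1) + 1) by (rewrite S_INR; ring).
  change (Factorial.fact (S m)) with (S m * Factorial.fact m)%nat.
  rewrite mult_INR. unfold K.
  set (G := Gamma (INR m + (b + 1) + 1)).
  transitivity (INR (fact m) / G * Rpower t b * exp (- t) * (INR (S m) * laguerreL (S m) b t)).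
  2: { unfold Rdiv; ring. }
  rewrite <- HL. unfold Rdiv. ring.
Qed.

Theorem lemma2p2 (a : R) (n i : nat) :
  (forall m : nat, a <> - INR (S m)) ->
  (1 <= n)%nat -> (i <= n - 1)%nat ->
  forall t : R, 0 < t ->
    is_derive
      (fun s => sum_f_R0 (fun k =>
          (-1) ^ k / INR (Factorial.fact (i - k)) * s ^ (i - k)
          * laguerre_fun (n - 1 - k) (a + 1 + INR k) s) i)
      t
      (t ^ i / INR (Factorial.fact i) * laguerre_fun n a t).
Proof.
  intros _ Hn Hi t Ht.
  set (u := fun k => (-1) ^ k / INR (Factorial.fact (i - k)) * (INR (i - k) * t ^ Init.Nat.pred (i - k))
                     * laguerre_fun (n - 1 - k) (a + 1 + INR k) t).
  set (v := fun k => (-1) ^ k / INR (Factorial.fact (i - k)) * t ^ (i - k)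
                     * laguerre_fun (S (n - 1 - k)) (a + INR k) t).
  eapply isd_val.
  - apply (isd_sum (fun k s => (-1) ^ k / INR (Factorial.fact (i - k)) * s ^ (i - k)
          * laguerre_fun (n - 1 - k) (a + 1 + INR k) s) (fun k => u k + v k)).
    intros k Hk.
    assert (Hp : is_derive (fun s => (-1) ^ k / INR (Factorial.fact (i - k)) * s ^ (i - k)) t
       ((-1) ^ k / INR (Factorial.fact (i - k)) * (INR (i - k) * t ^ Init.Nat.pred (i - k)))).
    { apply is_derive_scal. eapply isd_val. apply is_derive_pow. apply is_derive_id.
      simpl. change one with 1. ring. }
    pose proof (isd_mult _ _ _ _ _ Hp (lf_der (n - 1 - k) (a + INR k) (a + 1 + INR k) t Ht ltac:(ring))) as H.
    cbv beta in H. exact H.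
  - rewrite tel2.
    + replace (u i) with 0.
      * unfold v. rewrite Nat.sub_0_r, Nat.sub_0_r. replace (S (n - 1)) with n by lia.
        simpl INR. rewrite !Rplus_0_r. simpl pow. unfold Rdiv. ring.
      * unfold u. rewrite Nat.sub_diag. simpl INR. ring.
    + intros k Hk. unfold u, v.
      replace (i - k)%nat with (S (i - S k)) by lia.
      replace (S (n - 1 - S k)) with (n - 1 - k)%nat by lia.
      replace (a + INR (S k)) with (a + 1 + INR k) by (rewrite S_INR; ring).
      change (Factorial.fact (S (i - S k))) with (S (i - S k) * Factorial.fact (i - S k))%nat.
      rewrite mult_INR. simpl Init.Nat.pred. simpl pow.
      assert (INR (S (i - S k)) <> 0) by (apply not_0_INR; lia).
      generalize (fact_pos (i - S k)); intro. field. auto.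
Qed.
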